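(* A dual-rail CNOT gate cannot be heralded with a single ancilla photon in the following sense. Let $N=5$, and for each $k=1,\dots,4$ let the input be the Fock state $|x_k,1\rangle$ (first four modes $x_k$, one photon in mode $5$) where $x_1=(1,0,1,0)$, $x_2=(1,0,0,1)$, $x_3=(0,1,1,0)$, $x_4=(0,1,0,1)$, and let the corresponding targets be $Q_1=a^\dagger_1a^\dagger_3$, $Q_2=a^\dagger_1a^\dagger_4$, $Q_3=a^\dagger_2a^\dagger_4$, $Q_4=a^\dagger_2a^\dagger_3$ (i.e. $|1,0,1,0\rangle\mapsto|1,0,1,0\rangle$, $|1,0,0,1\rangle\mapsto|1,0,0,1\rangle$, $|0,1,1,0\rangle\mapsto|0,1,0,1\rangle$, $|0,1,0,1\rangle\mapsto|0,1,1,0\rangle$). Then there is no complex $5\times5$ matrix $A$ and no $\gamma\in\mathbb{C}$ such that $\gamma G_k=Q_k$ for all $k=1,\dots,4$ simultaneously, where $G_k$ is the heralded polynomial for input $k$ with heralding pattern $(1)$ on mode $5$.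
   Context: Heralded linear-optical model. States with a fixed photon number are homogeneous polynomials in commuting variables $a^\dagger_1,\dots,a^\dagger_N$ applied to the vacuum. Given $N$ modes, an arbitrary complex $N\times N$ matrix $A$ (not required to be unitary), and a Fock input $\prod_{i=1}^N\frac{1}{\sqrt{n_i!}}(a^\dagger_{i,\mathrm{in}})^{n_i}|0\rangle$, the output is $F|0\rangle$ with $F=\prod_{i=1}^N\frac{1}{\sqrt{n_i!}}\big(\sum_{j=1}^N A_{i,j}a^\dagger_j\big)^{n_i}$. Heralding the last $M$ modes on the pattern $(m_1,\dots,m_M)$, $m=\sum_jm_j$, gives $G=\frac{1}{\prod_jm_j!}\,\frac{\partial^{m}F}{\partial(a^\dagger_{N-M+1})^{m_1}\cdots\partial(a^\dagger_N)^{m_M}}\Big|_{a^\dagger_{N-M+1}=\cdots=a^\dagger_N=0}$, a polynomial in $a^\dagger_1,\dots,a^\dagger_{N-M}$. A heralded gate requires a single matrix $A$ and a single common $\gamma$ to satisfy $\gamma G_k=Q_k$ for every input–output pair $k$. *)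

(* Defs.v *)
From HB Require Import structures.
From mathcomp Require Import all_boot all_order all_algebra.
From mathcomp Require Import mpoly.
Set Implicit Arguments. Unset Strict Implicit. Unset Printing Implicit Defensive.
Import Order.TTheory GRing.Theory Num.Theory.
Local Open Scope ring_scope.

Section Herald.
Variable C : numClosedFieldType.

(* Modes are 'I_(K + M): the first K (lshift) are kept, the last M (rshift)
   are heralded. Creation operators a^dagger_j are the variables 'X_j. *)

Definition lin_out (N : nat) (A : 'M[C]_N) (i : 'I_N) : {mpoly C[N]} :=
  \sum_(j < N) A i j *: 'X_j.

Definition out_poly (N : nat) (A : 'M[C]_N) (n : 'I_N -> nat) : {mpoly C[N]} :=
  \prod_(i < N) ((sqrtC (n i)`!%:R)^-1 *: (lin_out A i ^+ n i)).

Definition herald_subst (K M : nat) : (K + M).-tuple {mpoly C[K]} :=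
  [tuple match split j with inl i => 'X_i | inr _ => 0 end | j < K + M].

Definition herald (K M : nat) (m : 'I_M -> nat) (F : {mpoly C[K + M]})
  : {mpoly C[K]} :=
  let D := foldr (fun k p => iter (m k) (mderiv (rshift K k)) p) F (enum 'I_M) in
  ((\prod_(k < M) (m k)`!)%:R^-1 *: D) \mPo herald_subst K M.

Definition heralded_poly (K M : nat) (A : 'M[C]_(K + M)) (n : 'I_(K + M) -> nat)
  (m : 'I_M -> nat) : {mpoly C[K]} :=
  herald m (out_poly A n).

Definition cnot_x (k : 'I_4) : 4.-tuple nat :=
  nth [tuple 1%N; 0%N; 1%N; 0%N]
    [:: [tuple 1%N; 0%N; 1%N; 0%N]; [tuple 1%N; 0%N; 0%N; 1%N];
        [tuple 0%N; 1%N; 1%N; 0%N]; [tuple 0%N; 1%N; 0%N; 1%N]] k.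

Definition cnot_input (k : 'I_4) (j : 'I_(4 + 1)) : nat :=
  match split j with inl i => tnth (cnot_x k) i | inr _ => 1%N end.

Definition cnot_target (k : 'I_4) : {mpoly C[4]} :=
  nth 0 [:: 'X_0 * 'X_2; 'X_0 * 'X_3; 'X_1 * 'X_3; 'X_1 * 'X_2] k.

Definition one_photon : 'I_1 -> nat := fun _ => 1%N.

End Herald.

(* Main.v *)
Require Import Defs.
From HB Require Import structures.
From mathcomp Require Import all_boot all_order all_algebra.
From mathcomp Require Import mpoly ring.
From Stdlib Require FunctionalExtensionality.
Import GRing.Theory Num.Theory.
Local Open Scope ring_scope.
Section S.
Variable C : numClosedFieldType.

Definition ext (v : 'I_4 -> C) (j : 'I_(4+1)) : C :=
  match split j with inl i => v i | inr _ => 0 end.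

Lemma herald_eval (A : 'M[C]_(4+1)) n v (Hn : forall i, (n i <= 1)%N) :
  meval v (heralded_poly A n one_photon) =
  meval (ext v) (mderiv (rshift 4 (ord0 : 'I_1)) (\prod_(i < 4+1) lin_out A i ^+ n i)).
Proof.
rewrite /heralded_poly /herald /out_poly.
have -> : enum 'I_1 = [:: ord0] by rewrite enum_ordSl enum_ord0.
rewrite /= big_ord1 /one_photon invr1 scale1r comp_mpoly_meval.
congr meval.
  apply: FunctionalExtensionality.functional_extensionality => j; rewrite /herald_subst tnth_mktuple /ext.
  by case: (split j) => [i|i]; rewrite ?mevalXU ?meval0.
congr mderiv; apply: eq_bigr => i _.
have: (n i)`! = 1%N by case: (n i) (Hn i) => [|[|]].
by move=> ->; rewrite sqrtC1 invr1 scale1r.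
Qed.


Lemma split_l (j : 'I_4) : split (lshift 1 j) = inl j.
Proof. exact: (unsplitK (inl _)). Qed.
Lemma split_r (j : 'I_1) : split (rshift 4 j) = inr j.
Proof. exact: (unsplitK (inr _)). Qed.

Definition ell (A : 'M[C]_(4+1)) (i : 'I_(4+1)) (v : 'I_4 -> C) : C :=
  \sum_(j < 4) A i (lshift 1 j) * v j.

Lemma meval_lin (A : 'M[C]_(4+1)) i v : meval (ext v) (lin_out A i) = ell A i v.
Proof.
rewrite /lin_out raddf_sum big_split_ord /= big_ord1.
rewrite mevalZ mevalXU /ext split_r mulr0 addr0.
by apply: eq_bigr => j _; rewrite mevalZ mevalXU /ext split_l.
Qed.

Lemma mderiv_lin (A : 'M[C]_(4+1)) i m (w : 'I_(4+1) -> C) : meval w (mderiv m (lin_out A i)) = A i m.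
Proof.
rewrite /lin_out (raddf_sum (mderiv m)) (raddf_sum (meval w)) (bigD1 m) //= big1 ?addr0.
  rewrite mderivZ mderivX mnm1E eqxx.
  by rewrite !mevalZ mevalX big1 ?mulr1 // => j _; rewrite mnmBE subnn expr0.
move=> j nj; rewrite mderivZ mderivX mnm1E (negPf nj) scale0r scaler0 meval0.
done.
Qed.



Definition o0 : 'I_(4+1) := lshift 1 (@Ordinal 4 0 erefl).
Definition o1 : 'I_(4+1) := lshift 1 (@Ordinal 4 1 erefl).
Definition o2 : 'I_(4+1) := lshift 1 (@Ordinal 4 2 erefl).
Definition o3 : 'I_(4+1) := lshift 1 (@Ordinal 4 3 erefl).
Definition o4 : 'I_(4+1) := rshift 4 (ord0 : 'I_1).

Lemma prod5 (R : ringType) (F : 'I_(4+1) -> R) :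
  \prod_(i < 4+1) F i = F o0 * F o1 * F o2 * F o3 * F o4.
Proof.
rewrite !big_ord_recl big_ord0 mulr1 !mulrA.
by congr (_ * _ * _ * _ * _); congr F; apply: val_inj.
Qed.

Lemma ci_l k (j : 'I_4) : cnot_input k (lshift 1 j) = tnth (cnot_x k) j.
Proof. by rewrite /cnot_input split_l. Qed.
Lemma ci_r k : cnot_input k o4 = 1%N.
Proof. by rewrite /cnot_input /o4 split_r. Qed.


Definition Gf (lp lq l4 bp bq c : C) := bp * lq * l4 + bq * lp * l4 + c * lp * lq.

Lemma ci_le1 (k : 'I_4) j : (cnot_input k j <= 1)%N.
Proof.
rewrite /cnot_input; case: (split j) => // i; rewrite /cnot_x.
by case: k => [[|[|[|[|]]]] ?] //=; case: i => [[|[|[|[|]]]] ?].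
Qed.

Ltac gk := rewrite herald_eval; last (by move=> i; exact: ci_le1); rewrite prod5 ci_r /o0 /o1 /o2 /o3 !ci_l /=;
  rewrite ?expr0 ?expr1 ?mul1r ?mulr1 !(mderivM, mevalD, mevalM, meval_lin, mderiv_lin) -/o4 /Gf; ring.

Lemma G0 (A : 'M[C]_(4+1)) v : meval v (heralded_poly A (cnot_input 0) one_photon) =
  Gf (ell A o0 v) (ell A o2 v) (ell A o4 v) (A o0 o4) (A o2 o4) (A o4 o4).
Proof. gk. Qed.
Lemma G1 (A : 'M[C]_(4+1)) v : meval v (heralded_poly A (cnot_input 1) one_photon) =
  Gf (ell A o0 v) (ell A o3 v) (ell A o4 v) (A o0 o4) (A o3 o4) (A o4 o4).
Proof. gk. Qed.
Lemma G2 (A : 'M[C]_(4+1)) v : meval v (heralded_poly A (cnot_input 2) one_photon) =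
  Gf (ell A o1 v) (ell A o2 v) (ell A o4 v) (A o1 o4) (A o2 o4) (A o4 o4).
Proof. gk. Qed.
Lemma G3 (A : 'M[C]_(4+1)) v : meval v (heralded_poly A (cnot_input 3) one_photon) =
  Gf (ell A o1 v) (ell A o3 v) (ell A o4 v) (A o1 o4) (A o3 o4) (A o4 o4).
Proof. gk. Qed.

Lemma req {x y x2 y2 : C} : x = y -> x2 = x -> y = y2 -> x2 = y2.
Proof. by move=> -> -> ->. Qed.

Lemma natC_neq0 (n : nat) : (n.+1%:R : C) = 0 -> False.
Proof. by move/eqP; rewrite pnatr_eq0. Qed.

Lemma negnat_neq0 {n : nat} {x : C} : x = - n.+1%:R -> x = 0 -> False.
Proof. by move=> -> /eqP; rewrite oppr_eq0 => /eqP; apply: natC_neq0. Qed.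

Lemma cancel_nat (n : nat) (x y : C) : n.+1%:R * x = n.+1%:R * y -> x = y.
Proof. by apply: mulfI; apply/negP => /eqP; apply: natC_neq0. Qed.

Lemma arith (c1 c2 c3 : C) (e1 : c1 + c2 + c3 = -21) (e2 : - c1 + c2 - c3 = 1)
  (e3 : 2 * c1 + 4 * c2 + 8 * c3 = -110) : c1 = -3 /\ c2 = -10 /\ c3 = -8.
Proof.
have h2 : c2 = -10.
  apply: (@cancel_nat 1); transitivity ((c1 + c2 + c3) + (- c1 + c2 - c3)); first ring.
  by rewrite e1 e2; ring.
have h3 : c3 = -8.
  apply: (@cancel_nat 5); transitivity ((2 * c1 + 4 * c2 + 8 * c3) - 2 * (c1 + c2 + c3) - 2 * c2); first ring.
  by rewrite e3 e1 h2; ring.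
suff h1 : c1 = -3 by [].
transitivity ((c1 + c2 + c3) - c2 - c3); first ring.
by rewrite e1 h2 h3; ring.
Qed.

Lemma final (g a0 a1 a2 a3 a4 m0 m1 m2 m3 m4 b0 b1 b2 b3 c : C) :
  (forall s t : C,
     g * Gf (a0 * s+m0 * t) (a2 * s+m2 * t) (a4 * s+m4 * t) b0 b2 c = s * (s+t) /\
     g * Gf (a0 * s+m0 * t) (a3 * s+m3 * t) (a4 * s+m4 * t) b0 b3 c = s * (2 * s+3 * t) /\
     g * Gf (a1 * s+m1 * t) (a2 * s+m2 * t) (a4 * s+m4 * t) b1 b2 c = t * (2 * s+3 * t) /\
     g * Gf (a1 * s+m1 * t) (a3 * s+m3 * t) (a4 * s+m4 * t) b1 b3 c = t * (s+t)) -> False.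
Proof.
move=> H.
pose Rf (l0 l1 l2 l3 : C) : C := (b0 * l2 + b2 * l0) * (b1 * l3 + b3 * l1) - (b0 * l3 + b3 * l0) * (b1 * l2 + b2 * l1).
have D s t : g^+2 * (a4 * s+m4 * t)^+2 * Rf (a0 * s+m0 * t) (a1 * s+m1 * t) (a2 * s+m2 * t) (a3 * s+m3 * t)
    = s * (s+t) * (t * (s+t)) - s * (2 * s+3 * t) * (t * (2 * s+3 * t)).
  have [e1 [e2 [e3 e4]]] := H s t; rewrite -e1 -e2 -e3 -e4 /Gf /Rf; ring.
have Dq s t : g^+2 * (a4 * s+m4 * t)^+2 * (Rf a0 a1 a2 a3 * s^+2
     + (Rf (a0+m0) (a1+m1) (a2+m2) (a3+m3) - Rf a0 a1 a2 a3 - Rf m0 m1 m2 m3) * s * t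
     + Rf m0 m1 m2 m3 * t^+2)
    = s * (s+t) * (t * (s+t)) - s * (2 * s+3 * t) * (t * (2 * s+3 * t)).
  rewrite -(D s t) /Rf; ring.
move: Dq; move: (Rf a0 a1 a2 a3) (Rf m0 m1 m2 m3) (Rf (a0+m0) (a1+m1) (a2+m2) (a3+m3)) => r0 r2 r' Dq.
move: (r' - r0 - r2) Dq => r1 Dq.
have h10 : g^+2 * a4^+2 * r0 = 0 by apply: (req (Dq 1 0)); ring.
have h01 : g^+2 * m4^+2 * r2 = 0 by apply: (req (Dq 0 1)); ring.
have h11 : g^+2 * a4^+2 * r0 + g^+2 * (a4^+2 * r1 + 2 * a4 * m4 * r0) + g^+2 * (a4^+2 * r2+2 * a4 * m4 * r1+m4^+2 * r0)
   + g^+2 * (m4^+2 * r1+2 * a4 * m4 * r2) + g^+2 * m4^+2 * r2 = -21 by apply: (req (Dq 1 1)); ring.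
have hm1 : g^+2 * a4^+2 * r0 - g^+2 * (a4^+2 * r1 + 2 * a4 * m4 * r0) + g^+2 * (a4^+2 * r2+2 * a4 * m4 * r1+m4^+2 * r0)
   - g^+2 * (m4^+2 * r1+2 * a4 * m4 * r2) + g^+2 * m4^+2 * r2 = 1 by apply: (req (Dq 1 (-1))); ring.
have h12 : g^+2 * a4^+2 * r0 + 2 * (g^+2 * (a4^+2 * r1 + 2 * a4 * m4 * r0)) + 4 * (g^+2 * (a4^+2 * r2+2 * a4 * m4 * r1+m4^+2 * r0))
   + 8 * (g^+2 * (m4^+2 * r1+2 * a4 * m4 * r2)) + 16 * (g^+2 * m4^+2 * r2) = -110 by apply: (req (Dq 1 2)); ring.
rewrite h10 h01 !mulr0 !add0r !addr0 in h11 hm1 h12.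
have [e1 [e2 e3]] := arith _ _ _ h11 hm1 h12.
have Hg : g <> 0.
  move=> g0; apply: (negnat_neq0 e1); rewrite g0; ring.
have Ha : a4 <> 0.
  move=> a0'; apply: (negnat_neq0 e1); rewrite a0'; ring.
have Hm : m4 <> 0.
  move=> m0'; apply: (negnat_neq0 e3); rewrite m0'; ring.
have Hr0 : r0 = 0.
  move/eqP: h10; rewrite !mulf_eq0; have /negPf -> : g != 0 by apply/eqP.
  have /negPf -> : a4 != 0 by apply/eqP.
  by move/eqP.
  
have Hr2 : r2 = 0.
  move/eqP: h01; rewrite !mulf_eq0; have /negPf -> : g != 0 by apply/eqP.
  have /negPf -> : m4 != 0 by apply/eqP.
  by move/eqP.
  
have h : (g ^+ 2 * (a4 ^+ 2 * r2 + 2 * a4 * m4 * r1 + m4 ^+ 2 * r0)) ^+ 2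
   = 4 * (g ^+ 2 * (a4 ^+ 2 * r1 + 2 * a4 * m4 * r0)) * (g ^+ 2 * (m4 ^+ 2 * r1 + 2 * a4 * m4 * r2)).
  by rewrite Hr0 Hr2; ring.
rewrite e1 e2 e3 in h.
apply: (@natC_neq0 3); transitivity ((-10) ^+ 2 - 4 * (-3) * (-8) : C); first ring.
by rewrite h subrr.
Qed.

Definition vst (s t : C) : 'I_4 -> C := fun j => nth 0 [:: s; t; s + t; 2 * s + 3 * t] j.

Lemma ell_lin (A : 'M[C]_(4+1)) i s t :
  ell A i (vst s t) = ell A i (vst 1 0) * s + ell A i (vst 0 1) * t.
Proof. rewrite /ell !big_ord_recl big_ord0 /vst /=; ring. Qed.

Lemma T0 s t : meval (vst s t) (cnot_target C 0) = s * (s + t).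
Proof. by rewrite /cnot_target /= mevalM !mevalXU. Qed.
Lemma T1 s t : meval (vst s t) (cnot_target C 1) = s * (2 * s + 3 * t).
Proof. by rewrite /cnot_target /= mevalM !mevalXU. Qed.
Lemma T2 s t : meval (vst s t) (cnot_target C 2) = t * (2 * s + 3 * t).
Proof. by rewrite /cnot_target /= mevalM !mevalXU. Qed.
Lemma T3 s t : meval (vst s t) (cnot_target C 3) = t * (s + t).
Proof. by rewrite /cnot_target /= mevalM !mevalXU. Qed.
End S.

Theorem mainTheorem5 (C : numClosedFieldType) :
  ~ exists (A : 'M[C]_(4 + 1)) (gamma : C),
      forall k : 'I_4,
        gamma *: heralded_poly A (cnot_input k) one_photon = cnot_target C k.
Proof.
move=> [A [g H]].
pose a i := @ell C A i (@vst C 1 0); pose m i := @ell C A i (@vst C 0 1).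
apply: (@final C g (a o0) (a o1) (a o2) (a o3) (a o4) (m o0) (m o1) (m o2) (m o3) (m o4)
  (A o0 o4) (A o1 o4) (A o2 o4) (A o3 o4) (A o4 o4)) => s t.
have E k := congr1 (meval (@vst C s t)) (H k).
move: (E 0) (E 1) (E 2) (E 3).
rewrite !mevalZ G0 G1 G2 G3 T0 T1 T2 T3 !(ell_lin _ _ _ s t).
by move=> -> -> -> ->.
Qed.
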